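(* Let $L_x,L_y>0$, $L_{xy}\geq 0$, let $F\in\mathcal{F}(L_x, L_y, L_{xy}, 0, 0)$ with nonempty saddle point set $S^\star$, and let $t>0$. Suppose the gradient descent-ascent method with step length $t$ is linearly convergent for any initial point, i.e. there exists $\alpha\in[0,1)$ such that for every $(x^1,y^1)\in\mathbb{R}^n\times\mathbb{R}^m$ the point $x^{2}=x^1-t\nabla_x F(x^1, y^1)$, $y^{2}=y^1+t\nabla_y F(x^1, y^1)$ satisfies $d_{S^\star}^2((x^2,y^2))\leq \alpha\, d_{S^\star}^2((x^1,y^1))$. Then $F$ has a quadratic gradient growth for some $\mu_F>0$.
   Context: $\mathcal{F}(L_x, L_y, L_{xy}, 0, 0)$ denotes the set of differentiable $F:\mathbb{R}^n\times\mathbb{R}^m\to\mathbb{R}$ with $F(\cdot,y)$ convex for all $y$, $F(x,\cdot)$ concave for all $x$, and for all $x,x_1,x_2,y,y_1,y_2$: $\|\nabla_x F(x_2, y)-\nabla_x F(x_1, y)\|\leq L_x\|x_2-x_1\|$; $\|\nabla_y F(x, y_2)-\nabla_y F(x, y_1)\|\leq L_y\|y_2-y_1\|$; $\|\nabla_x F(x, y_2)-\nabla_x F(x, y_1)\|\leq L_{xy}\|y_2-y_1\|$; $\|\nabla_y F(x_2, y)-\nabla_y F(x_1, y)\|\leq L_{xy}\|x_2-x_1\|$. $S^\star$ is the set of saddle points $(x^\star,y^\star)$, i.e. $F(x^\star, y)\leq F(x^\star, y^\star)\leq F(x, y^\star)$ for all $x,y$; it is closed and convex. $d_{S^\star}(z)=\inf_{w\in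 S^\star}\|z-w\|$. $F$ has quadratic gradient growth with $\mu_F>0$ if for all $(x,y)$: $\langle \nabla_x F(x,y), x-x^\star\rangle-\langle \nabla_y F(x,y), y-y^\star\rangle \geq \mu_F\, d_{S^\star}^2((x,y))$, where $(x^\star,y^\star)$ is the Euclidean projection of $(x,y)$ onto $S^\star$. *)

(* Defs.v *)
From HB Require Import structures.
From mathcomp Require Import all_boot all_order all_algebra.
From mathcomp Require Import all_classical all_reals all_analysis.
Set Implicit Arguments. Unset Strict Implicit. Unset Printing Implicit Defensive.
Import Order.TTheory GRing.Theory Num.Theory.
Import numFieldNormedType.Exports.
Local Open Scope classical_set_scope.
Local Open Scope ring_scope.

Section Defs.
Variable R : realType.

Definition dotv (k : nat) (u v : 'rV[R]_k) : R := \sum_(i < k) u 0 i * v 0 i.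
Definition enorm (k : nat) (u : 'rV[R]_k) : R := Num.sqrt (dotv u u).

Variables n m : nat.
Implicit Types F : 'rV[R]_n -> 'rV[R]_m -> R.

Definition differentiableF F : Prop :=
  forall z : 'rV[R]_n * 'rV[R]_m, differentiable (fun w : 'rV[R]_n * 'rV[R]_m => F w.1 w.2) z.

Definition gradx F (x : 'rV[R]_n) (y : 'rV[R]_m) : 'rV[R]_n :=
  \row_(i < n) 'D_(delta_mx 0 i) (fun x' : 'rV[R]_n => F x' y) x.
Definition grady F (x : 'rV[R]_n) (y : 'rV[R]_m) : 'rV[R]_m :=
  \row_(j < m) 'D_(delta_mx 0 j) (fun y' : 'rV[R]_m => F x y') y.

Definition convex_fun (k : nat) (f : 'rV[R]_k -> R) : Prop :=
  forall (a b : 'rV[R]_k) (l : R), 0 <= l -> l <= 1 ->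
    f (l *: a + (1 - l) *: b) <= l * f a + (1 - l) * f b.
Definition concave_fun (k : nat) (f : 'rV[R]_k -> R) : Prop :=
  forall (a b : 'rV[R]_k) (l : R), 0 <= l -> l <= 1 ->
    l * f a + (1 - l) * f b <= f (l *: a + (1 - l) *: b).

Definition in_class_F (Lx Ly Lxy : R) F : Prop :=
  differentiableF F /\
  (forall y, convex_fun (fun x => F x y)) /\
  (forall x, concave_fun (fun y => F x y)) /\
  (forall x1 x2 y, enorm (gradx F x2 y - gradx F x1 y) <= Lx * enorm (x2 - x1)) /\
  (forall x y1 y2, enorm (grady F x y2 - grady F x y1) <= Ly * enorm (y2 - y1)) /\
  (forall x y1 y2, enorm (gradx F x y2 - gradx F x y1) <= Lxy * enorm (y2 - y1)) /\
  (forall x1 x2 y, enorm (grady F x2 y - grady F x1 y) <= Lxy * enorm (x2 - x1)).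

Definition saddle_set F : set ('rV[R]_n * 'rV[R]_m) :=
  [set z | forall x y, F z.1 y <= F z.1 z.2 /\ F z.1 z.2 <= F x z.2].

Definition zdist (z w : 'rV[R]_n * 'rV[R]_m) : R :=
  Num.sqrt (dotv (z.1 - w.1) (z.1 - w.1) + dotv (z.2 - w.2) (z.2 - w.2)).

Definition distS (S : set ('rV[R]_n * 'rV[R]_m)) (z : 'rV[R]_n * 'rV[R]_m) : R :=
  inf [set zdist z w | w in S].

Definition is_proj (S : set ('rV[R]_n * 'rV[R]_m)) (z w : 'rV[R]_n * 'rV[R]_m) : Prop :=
  S w /\ zdist z w = distS S z.

Definition gda_step F (t : R) (z : 'rV[R]_n * 'rV[R]_m) : 'rV[R]_n * 'rV[R]_m :=
  (z.1 - t *: gradx F z.1 z.2, z.2 + t *: grady F z.1 z.2).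

Definition quad_grad_growth F (mu : R) : Prop :=
  forall (z p : 'rV[R]_n * 'rV[R]_m), is_proj (saddle_set F) z p ->
    dotv (gradx F z.1 z.2) (z.1 - p.1) - dotv (grady F z.1 z.2) (z.2 - p.2)
      >= mu * (distS (saddle_set F) z) ^+ 2.

End Defs.

(* Main.v *)
Require Import Defs.
From HB Require Import structures.
From mathcomp Require Import all_boot all_order all_algebra.
From mathcomp Require Import all_classical all_reals all_analysis.
From mathcomp Require Import ring lra.
Import Order.TTheory GRing.Theory Num.Theory.
Local Open Scope classical_set_scope.
Local Open Scope ring_scope.

Section Aux.
Context {R : realType}.

Lemma dotvC {k} (u v : 'rV[R]_k) : dotv u v = dotv v u.
Proof. by rewrite /dotv; apply: eq_bigr => i _; rewrite mulrC. Qed.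

Lemma dotvBl {k} (u v w : 'rV[R]_k) : dotv (u - v) w = dotv u w - dotv v w.
Proof. by rewrite /dotv -sumrB; apply: eq_bigr => i _; rewrite !mxE mulrBl. Qed.

Lemma dotvZl {k} a (u w : 'rV[R]_k) : dotv (a *: u) w = a * dotv u w.
Proof. by rewrite /dotv mulr_sumr; apply: eq_bigr => i _; rewrite !mxE mulrA. Qed.

Lemma dotvBr {k} (u v w : 'rV[R]_k) : dotv w (u - v) = dotv w u - dotv w v.
Proof. by rewrite dotvC dotvBl !(dotvC w). Qed.

Lemma dotvZr {k} a (u w : 'rV[R]_k) : dotv w (a *: u) = a * dotv w u.
Proof. by rewrite dotvC dotvZl (dotvC u). Qed.

Lemma dotv_ge0 {k} (u : 'rV[R]_k) : 0 <= dotv u u.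
Proof. by rewrite /dotv; apply: sumr_ge0 => i _; rewrite -expr2 sqr_ge0. Qed.

Lemma dotv_expand {k} (u v : 'rV[R]_k) l :
  dotv (u - l *: v) (u - l *: v) = dotv u u - 2 * l * dotv u v + l ^+ 2 * dotv v v.
Proof.
rewrite !dotvBl !dotvBr !dotvZl !dotvZr (dotvC v u); ring.
Qed.

Lemma cs_scalar (qa qb B : R) : 0 <= qa -> 0 <= qb ->
  (forall l, 0 <= qa - 2 * l * B + l ^+ 2 * qb) ->
  B <= Num.sqrt qa * Num.sqrt qb.
Proof.
move=> ha hb H.
have s0 : 0 <= Num.sqrt qa * Num.sqrt qb by rewrite mulr_ge0 // sqrtr_ge0.
have s2 : (Num.sqrt qa * Num.sqrt qb) ^+ 2 = qa * qb by rewrite exprMn !sqr_sqrtr.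
have [qb0|qbp] := eqVneq qb 0.
  rewrite leNgt; apply/negP => hB.
  have hBp : 0 < B by apply: le_lt_trans hB.
  have := H ((qa + 1) / (2 * B)); rewrite qb0 mulr0 addr0.
  have -> : 2 * ((qa + 1) / (2 * B)) * B = qa + 1.
    by field; rewrite gt_eqF.
  lra.
have qbpos : 0 < qb by rewrite lt_neqAle eq_sym qbp.
have := H (B / qb).
have -> : qa - 2 * (B / qb) * B + (B / qb) ^+ 2 * qb = qa - B ^+ 2 / qb.
  by field; rewrite gt_eqF.
move=> h.
have h2 : B ^+ 2 <= qa * qb.
  have : B ^+ 2 / qb * qb <= qa * qb by apply: ler_wpM2r; [exact: ltW | lra].
  by rewrite divfK // gt_eqF.
set s := Num.sqrt qa * Num.sqrt qb in s0 s2 *.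
rewrite -s2 in h2. nra.
Qed.

Lemma vec_id1 {k} (z p w g : 'rV[R]_k) t :
  z - t *: g - w = (z - p) - t *: g - (w - p).
Proof. by apply/rowP => i; rewrite !mxE; ring. Qed.

Lemma vec_id2 {k} (z p w g : 'rV[R]_k) t :
  z + t *: g - w = (z - p) - (- t) *: g - (w - p).
Proof. by apply/rowP => i; rewrite !mxE; ring. Qed.

Lemma vec_id3 {k} (z p w : 'rV[R]_k) l :
  z - (l *: w + (1 - l) *: p) = (z - p) - l *: (w - p).
Proof. by apply/rowP => i; rewrite !mxE; ring. Qed.

Context {n m : nat}.

Lemma saddle_convex (F : 'rV[R]_n -> 'rV[R]_m -> R) w p l :
  (forall y, convex_fun (fun x => F x y)) ->
  (forall x, concave_fun (fun y => F x y)) ->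
  saddle_set F w -> saddle_set F p -> 0 <= l -> l <= 1 ->
  saddle_set F (l *: w.1 + (1 - l) *: p.1, l *: w.2 + (1 - l) *: p.2).
Proof.
move=> cvx ccv Sw Sp l0 l1 x y /=.
have e1 : F w.1 w.2 = F p.1 p.2.
  have [a1 a2] := Sw p.1 p.2. have [b1 b2] := Sp w.1 w.2. lra.
have l0' : 0 <= 1 - l by lra.
have h1 : forall y, F (l *: w.1 + (1 - l) *: p.1) y <= F p.1 p.2.
  move=> y'; apply: le_trans (cvx y' w.1 p.1 l l0 l1) _.
  have [a1 _] := Sw x y'. have [b1 _] := Sp x y'.
  rewrite -e1 in b1 *. nra.
have h2 : forall x, F p.1 p.2 <= F x (l *: w.2 + (1 - l) *: p.2).
  move=> x'; apply: le_trans _ (ccv x' w.2 p.2 l l0 l1).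
  have [_ a1] := Sw x' y. have [_ b1] := Sp x' y.
  rewrite -e1 in b1 *. nra.
have e2 := h1 (l *: w.2 + (1 - l) *: p.2).
have e3 := h2 (l *: w.1 + (1 - l) *: p.1).
split; [apply: le_trans (h1 y) _ | apply: le_trans _ (h2 x)]; lra.
Qed.

End Aux.

Theorem theorem3p4 (R : realType) (n m : nat) (Lx Ly Lxy t : R)
  (F : 'rV[R]_n -> 'rV[R]_m -> R) :
  0 < Lx -> 0 < Ly -> 0 <= Lxy ->
  in_class_F Lx Ly Lxy F ->
  (exists w, saddle_set F w) ->
  0 < t ->
  (exists alpha : R, 0 <= alpha /\ alpha < 1 /\
     forall z : 'rV[R]_n * 'rV[R]_m,
       (distS (saddle_set F) (gda_step F t z)) ^+ 2
         <= alpha * (distS (saddle_set F) z) ^+ 2) ->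
  exists mu : R, 0 < mu /\ quad_grad_growth F mu.
Proof.
move=> _ _ _ [_ [cvx [ccv _]]] _ tp [al [al0 [al1 Hconv]]].
set s := Num.sqrt al.
have s0 : 0 <= s by apply: sqrtr_ge0.
have s2 : s ^+ 2 = al by rewrite sqr_sqrtr.
have s1 : s < 1 by rewrite /s -sqrtr1 ltr_sqrt.
exists ((1 - s) / t); split; first by rewrite divr_gt0 // subr_gt0.
move=> z p [Sp hp].
set S := saddle_set F in Sp hp *.
have lbS : forall z' w, S w -> distS S z' <= zdist z' w.
  move=> z' w Sw; apply: (ge_inf _); last by exists w.
  exists 0 => _ [w' _ <-]; exact: sqrtr_ge0.
have geS : forall z' c, (forall w, S w -> c <= zdist z' w) -> c <= distS S z'.
  move=> z' c Hc; apply: lb_le_inf; first by exists (zdist z' p), p.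
  by move=> _ [w' Sw' <-]; apply: Hc.
set a1 := z.1 - p.1. set a2 := z.2 - p.2.
set Q0 := dotv a1 a1 + dotv a2 a2.
have Q0ge : 0 <= Q0 by rewrite addr_ge0 // dotv_ge0.
set D := distS S z.
have DQ : D = Num.sqrt Q0 by rewrite /D -hp.
have D0 : 0 <= D by rewrite DQ sqrtr_ge0.
have D2 : D ^+ 2 = Q0 by rewrite DQ sqr_sqrtr.
have VI : forall w, S w -> dotv (w.1 - p.1) a1 + dotv (w.2 - p.2) a2 <= 0.
  move=> w Sw.
  set B := dotv (w.1 - p.1) a1 + dotv (w.2 - p.2) a2.
  set Qv := dotv (w.1 - p.1) (w.1 - p.1) + dotv (w.2 - p.2) (w.2 - p.2).
  have Qv0 : 0 <= Qv by rewrite addr_ge0 // dotv_ge0.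
  have H : forall l, 0 < l -> l <= 1 -> 2 * B <= l * Qv.
    move=> l lp l1.
    have := lbS z _ (@saddle_convex R n m F w p l cvx ccv Sw Sp (ltW lp) l1).
    rewrite -/D DQ /zdist /= ler_sqrt; last by rewrite addr_ge0 // dotv_ge0.
    rewrite !vec_id3 !dotv_expand /Q0 /B /Qv /a1 /a2.
    rewrite (dotvC (z.1 - p.1) (w.1 - p.1)) (dotvC (z.2 - p.2) (w.2 - p.2)) => h.
    have : l * (2 * B) <= l * (l * Qv) by rewrite /B /Qv /a1 /a2; lra.
    by rewrite ler_pM2l.
  rewrite leNgt; apply/negP => Bp.
  have [Qz|Qp] := eqVneq Qv 0.
    have := H 1 ltr01 (lexx _); rewrite Qz; lra.
  have Qpos : 0 < Qv by rewrite lt_neqAle eq_sym Qp.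
  have := H (Num.min 1 (B / Qv)).
  rewrite lt_min ltr01 divr_gt0 // ge_min lexx /= => /(_ isT isT).
  have : Num.min 1 (B / Qv) * Qv <= B.
    by rewrite -ler_pdivlMr // ge_min lexx orbT.
  lra.
set gx := gradx F z.1 z.2. set gy := grady F z.1 z.2.
set gam := dotv gx a1 - dotv gy a2.
set c := Q0 - t * gam.
have Hw : forall w, S w -> c <= zdist (gda_step F t z) w * D.
  move=> w Sw.
  rewrite /zdist /gda_step /= -/gx -/gy DQ.
  set u1 := z.1 - t *: gx - w.1. set u2 := z.2 + t *: gy - w.2.
  set Bw := dotv u1 a1 + dotv u2 a2.
  have cB : c <= Bw.
    have := VI w Sw.
    rewrite /Bw /u1 /u2 (vec_id1 _ p.1) (vec_id2 _ p.2) !dotvBl !dotvZl -/a1 -/a2.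
    have e1 : dotv a1 a1 = dotv z.1 a1 - dotv p.1 a1 by rewrite /a1 dotvBl.
    have e2 : dotv a2 a2 = dotv z.2 a2 - dotv p.2 a2 by rewrite /a2 dotvBl.
    rewrite /c /gam /Q0 e1 e2; lra.
  apply: (le_trans cB); apply: cs_scalar.
  - by rewrite addr_ge0 // dotv_ge0.
  - exact: Q0ge.
  - move=> l.
    have := addr_ge0 (dotv_ge0 (u1 - l *: a1)) (dotv_ge0 (u2 - l *: a2)).
    rewrite !dotv_expand /Bw /Q0; lra.
set d2 := distS S (gda_step F t z).
have cd : c <= d2 * D.
  have [Dz|Dp] := eqVneq D 0.
    have := Hw p Sp; rewrite Dz !mulr0; done.
  have Dpos : 0 < D by rewrite lt_neqAle eq_sym Dp.
  rewrite -ler_pdivrMr //; apply: geS => w Sw.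
  by rewrite ler_pdivrMr //; apply: Hw.
have d20 : 0 <= d2 by apply: geS => w _; apply: sqrtr_ge0.
have hd : d2 ^+ 2 <= al * D ^+ 2 by apply: Hconv.
have d2s : d2 <= s * D.
  rewrite -(@ler_pXn2r _ 2%N) // ?nnegrE ?mulr_ge0 //.
  by rewrite exprMn s2.
have cQ : c <= s * Q0.
  rewrite -D2; apply: (le_trans cd); rewrite expr2 mulrA.
  by apply: ler_wpM2r.
rewrite D2.
have -> : (1 - s) / t * Q0 = ((1 - s) * Q0) / t by rewrite mulrAC.
rewrite ler_pdivrMr //.
move: cQ; rewrite /c /gam; lra.
Qed.
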